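(* Let $G=(V,E)$ be a finite graph with special vertex $i$, symmetric edge weights $w_E$ (with $w_E(u,v)=0$ for $uv\notin E$) and vertex weights $w_V$ (nonnegative, not identically zero), such that $G$ and $G-i$ are each positively connected. Let $f_i$ be a solution of $$\min_{\|g\|_w=1,\ g(i)=0}\ \sum_{jk\in E} w_E(j,k)\,(g(k)-g(j))^2,$$ positive on $V\setminus\{i\}$. Fix vertices $j,k$ such that $G-j$ is not connected and $i$ and $k$ lie in different components of $G-j$, and suppose $w_V(k)>0$. Then $f_i(k)>f_i(j)$. Moreover, the spectral path from $k$ to $i$ passes through $j$.
   Context: $\|g\|_w=\sqrt{\sum_{u\in V}w_V(u)g(u)^2}$; each edge is counted once. A weighted graph is positively connected if any two vertices are joined by a path of positive-weight edges; $G-x$ is $G$ with vertex $x$ deleted. Edges of weight zero are regarded as deleted, so neighborhoods $N(u)$, paths and connectivity refer to positive-weight edges. The spectral path from $k$ to $i$ is the sequence $k=k_0,k_1,\dots$ where $k_{\ell+1}$ is a neighbor of $k_\ell$ minimizing $f_i$ over $N(k_\ell)$ (ties broken arbitrarily), stopped when $i$ is reached; under the hypotheses it is well-defined, with $f_i$ strictly decreasing along it. *)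

(* Defs.v *)
From HB Require Import structures.
From mathcomp Require Import all_boot all_order all_algebra.
Set Implicit Arguments. Unset Strict Implicit. Unset Printing Implicit Defensive.
Import Order.TTheory GRing.Theory Num.Theory.
Local Open Scope ring_scope.

(* Weighted graph on a finite vertex type V; wE : V -> V -> R edge weights,
   edges of weight zero are regarded as deleted. *)

Definition pos_adj_in (R : numDomainType) (V : finType) (wE : V -> V -> R)
  (S : {set V}) : rel V :=
  fun u v => [&& u \in S, v \in S, u != v & 0 < wE u v].

Definition pos_connected_in (R : numDomainType) (V : finType) (wE : V -> V -> R)
  (S : {set V}) (u v : V) : bool :=
  connect (pos_adj_in wE S) u v.

Definition pos_connected (R : numDomainType) (V : finType) (wE : V -> V -> R)
  (S : {set V}) : Prop :=
  forall u v, u \in S -> v \in S -> pos_connected_in wE S u v.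

Definition nbhd (R : numDomainType) (V : finType) (wE : V -> V -> R) (u : V)
  : {set V} := [set v | (v != u) && (0 < wE u v)].

Definition wnorm (R : rcfType) (V : finType) (wV : V -> R) (g : V -> R) : R :=
  Num.sqrt (\sum_(u : V) wV u * g u ^+ 2).

(* Dirichlet energy, each (unordered) edge counted once *)
Definition energy (R : numDomainType) (V : finType) (wE : V -> V -> R)
  (g : V -> R) : R :=
  \sum_(jk : V * V | (enum_rank jk.1 < enum_rank jk.2)%N)
      wE jk.1 jk.2 * (g jk.2 - g jk.1) ^+ 2.

Definition is_minimizer (R : rcfType) (V : finType) (wE : V -> V -> R)
  (wV : V -> R) (i : V) (f : V -> R) : Prop :=
  [/\ wnorm wV f = 1, f i = 0 &
      forall g : V -> R, wnorm wV g = 1 -> g i = 0 -> energy wE f <= energy wE g].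

Definition spectral_step (R : numDomainType) (V : finType) (wE : V -> V -> R)
  (f : V -> R) : rel V :=
  fun x y => (y \in nbhd wE x) && [forall z in nbhd wE x, f y <= f z].

(* k :: p is a spectral path from k to i (with any tie-breaking),
   stopped when i is first reached *)
Definition spectral_path (R : numDomainType) (V : finType) (wE : V -> V -> R)
  (f : V -> R) (i k : V) (p : seq V) : Prop :=
  [/\ path (spectral_step wE f) k p, last k p = i & i \notin belast k p].

(* Main.v *)
Require Import Defs.
From HB Require Import structures.
From mathcomp Require Import all_boot all_order all_algebra.
From mathcomp Require Import ring lra.
Set Implicit Arguments. Unset Strict Implicit. Unset Printing Implicit Defensive.
Import Order.TTheory GRing.Theory Num.Theory.
Local Open Scope ring_scope.

Definition fsum (R : numDomainType) (V : finType) (wE : V -> V -> R) (g : V -> R) : R :=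
  \sum_(a : V) \sum_(b : V) wE a b * (g b - g a) ^+ 2.

Lemma energyE (R : numDomainType) (V : finType) (wE : V -> V -> R) (g : V -> R) :
  (forall u v, wE u v = wE v u) -> energy wE g *+ 2 = fsum wE g.
Proof.
move=> sym; rewrite /fsum /energy pair_big /=.
rewrite [RHS](bigID (fun p : V * V => (enum_rank p.1 < enum_rank p.2)%N)) /= mulr2n.
congr (_ + _).
have -> : \sum_(p : V * V | ~~ (enum_rank p.1 < enum_rank p.2)%N) wE p.1 p.2 * (g p.2 - g p.1) ^+ 2
   = \sum_(p : V * V | (enum_rank p.2 < enum_rank p.1)%N) wE p.1 p.2 * (g p.2 - g p.1) ^+ 2.
  rewrite big_mkcond [RHS]big_mkcond; apply: eq_bigr => [[a b]] _ /=.
  case: (ltngtP (enum_rank a) (enum_rank b)) => // /val_inj /enum_rank_inj ->.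
  by rewrite subrr expr0n /= mulr0.
rewrite [RHS](reindex_inj (h := fun p : V * V => (p.2, p.1))); last first.
  by move=> [a b] [c d] /= [-> ->].
apply: eq_bigr => [[a b]] _ /=; rewrite sym; congr (_ * _).
by rewrite -sqrrN opprB.
Qed.

Lemma fsum_pert (R : numDomainType) (V : finType) (wE : V -> V -> R) (f h : V -> R) t :
  fsum wE (fun v => f v + t * h v) = fsum wE f
   + t *+ 2 * (\sum_a \sum_b wE a b * ((f b - f a) * (h b - h a))) + t ^+ 2 * fsum wE h.
Proof.
rewrite /fsum !mulr_sumr -!big_split /=; apply: eq_bigr => a _.
rewrite !mulr_sumr -!big_split /=; apply: eq_bigr => b _; ring.
Qed.

Lemma sum_delta (R : numDomainType) (V : finType) (u : V) (X : V -> R) :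
  \sum_v (v == u)%:R * X v = X u.
Proof.
rewrite (bigD1 u) //= eqxx mul1r big1 ?addr0 // => v /negbTE ->; by rewrite mul0r.
Qed.

Lemma cross_delta (R : numDomainType) (V : finType) (wE : V -> V -> R) (f : V -> R) u :
  (forall u v, wE u v = wE v u) ->
  \sum_a \sum_b wE a b * ((f b - f a) * ((b == u)%:R - (a == u)%:R))
  = (\sum_v wE u v * (f u - f v)) *+ 2.
Proof.
move=> sym.
have -> : \sum_a \sum_b wE a b * ((f b - f a) * ((b == u)%:R - (a == u)%:R))
  = \sum_a \sum_b (b == u)%:R * (wE a b * (f b - f a))
    - \sum_a (a == u)%:R * \sum_b (wE a b * (f b - f a)).
  rewrite -sumrB; apply: eq_bigr => a _; rewrite mulr_sumr -sumrB; apply: eq_bigr => b _; ring.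
rewrite exchange_big /=.
under eq_bigr => b _ do rewrite -mulr_sumr.
rewrite !sum_delta mulr2n; congr (_ + _).
  by apply: eq_bigr => v _; rewrite sym.
by rewrite -sumrN; apply: eq_bigr => v _; ring.
Qed.

Definition nsum (R : numDomainType) (V : finType) (wV : V -> R) (g : V -> R) : R :=
  \sum_v wV v * g v ^+ 2.

Lemma nsum_pert (R : numDomainType) (V : finType) (wV : V -> R) (f : V -> R) u t :
  nsum wV (fun v => f v + t * (v == u)%:R) = nsum wV f
   + t *+ 2 * (wV u * f u) + t ^+ 2 * wV u.
Proof.
have -> : nsum wV (fun v => f v + t * (v == u)%:R) =
  nsum wV f + \sum_v (v == u)%:R * (t *+ 2 * (wV v * f v) + t ^+ 2 * wV v).
  rewrite /nsum -big_split; apply: eq_bigr => v _ /=.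
  case: (v == u) => /=; ring.
by rewrite sum_delta addrA.
Qed.

Lemma energy_ge0 (R : realDomainType) (V : finType) (wE : V -> V -> R) g :
  (forall u v, 0 <= wE u v) -> 0 <= energy wE g.
Proof. by move=> pos; apply: sumr_ge0 => p _; rewrite mulr_ge0 ?sqr_ge0 ?pos. Qed.

Lemma nsum_ge0 (R : realDomainType) (V : finType) (wV : V -> R) g :
  (forall u, 0 <= wV u) -> 0 <= nsum wV g.
Proof. by move=> pos; apply: sumr_ge0 => p _; rewrite mulr_ge0 ?sqr_ge0 ?pos. Qed.

Lemma energyZ (R : numDomainType) (V : finType) (wE : V -> V -> R) g c :
  energy wE (fun v => c * g v) = c ^+ 2 * energy wE g.
Proof. by rewrite /energy mulr_sumr; apply: eq_bigr => p _; ring. Qed.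

Lemma nsumZ (R : numDomainType) (V : finType) (wV : V -> R) g c :
  nsum wV (fun v => c * g v) = c ^+ 2 * nsum wV g.
Proof. by rewrite /nsum mulr_sumr; apply: eq_bigr => p _; ring. Qed.

Lemma min_bound (R : rcfType) (V : finType) (wE : V -> V -> R) (wV : V -> R) i f g :
  (forall u v, 0 <= wE u v) -> (forall u, 0 <= wV u) ->
  is_minimizer wE wV i f -> g i = 0 ->
  nsum wV f = 1 /\ energy wE f * nsum wV g <= energy wE g.
Proof.
move=> pE pV [nf fi0 minf] gi0.
have nf1 : nsum wV f = 1.
  by rewrite -(sqr_sqrtr (nsum_ge0 f pV)); move: nf; rewrite /wnorm => ->; rewrite expr1n.
split=> //.
have := nsum_ge0 g pV; rewrite le_eqVlt => /orP [/eqP <-|Npos].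
  by rewrite mulr0 energy_ge0.
set c := (Num.sqrt (nsum wV g))^-1.
have c2 : c ^+ 2 = (nsum wV g)^-1 by rewrite /c exprVn sqr_sqrtr // ltW.
have := minf (fun v => c * g v).
rewrite energyZ c2 => H.
have {}H : energy wE f <= (nsum wV g)^-1 * energy wE g.
  apply: H; last by rewrite gi0 mulr0.
  by rewrite /wnorm -/(nsum wV _) nsumZ c2 mulVf ?sqrtr1 // gt_eqF.
by rewrite -ler_pdivlMr // mulrC.
Qed.

Lemma quad_lin (R : realFieldType) (a b : R) :
  (forall t, 0 <= t * a + t ^+ 2 * b) -> 0 <= a.
Proof.
move=> H; rewrite leNgt; apply/negP => an.
set c := `|b| + 1.
have cpos : 0 < c by rewrite /c ltr_wpDl.
have bc : b / c < 1.
  by rewrite ltr_pdivrMr // mul1r /c (le_lt_trans (ler_norm b)) // ltrDl.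
set t := - a / c.
have tpos : 0 < t by rewrite /t divr_gt0 // oppr_gt0.
have e : t * a + t ^+ 2 * b = t * (a * (1 - b / c)).
  rewrite /t; field; exact: lt0r_neq0.
have := H t; rewrite e pmulr_rge0 // => h.
have : 0 < 1 - b / c by rewrite subr_gt0.
move=> p; have : a * (1 - b / c) < 0 by rewrite pmulr_llt0.
by rewrite ltNge h.
Qed.

Lemma EL (R : rcfType) (V : finType) (wE : V -> V -> R) (wV : V -> R) i f u :
  (forall u v, wE u v = wE v u) ->
  (forall u v, 0 <= wE u v) -> (forall u, 0 <= wV u) ->
  is_minimizer wE wV i f -> u != i ->
  energy wE f * (wV u * f u) <= \sum_v wE u v * (f u - f v).
Proof.
move=> sym pE pV mf ui.
set D := \sum_v wE u v * (f u - f v).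
set L := energy wE f.
pose K := fsum wE (fun v => (v == u)%:R : R).
have key : forall t, 0 <= t * ((D - L * (wV u * f u)) *+ 4) + t ^+ 2 * (K - L *+ 2 * wV u).
  move=> t.
  have gi : (fun v => f v + t * (v == u)%:R) i = 0.
    have iu : (i == u) = false by rewrite eq_sym (negbTE ui).
    by case: mf => _ -> _; rewrite /= iu mulr0 addr0.
  have [n1 H] := min_bound (g := fun v => f v + t * (v == u)%:R) pE pV mf gi.
  move: H; rewrite -/(nsum wV _) nsum_pert n1.
  move/(ler_wMn2r 2); rewrite energyE // fsum_pert cross_delta // -energyE // -/L -/K -/D.
  move=> H; rewrite -subr_ge0 in H.
  have -> : t * ((D - L * (wV u * f u)) *+ 4) + t ^+ 2 * (K - L *+ 2 * wV u) =
    L *+ 2 + t *+ 2 * (D *+ 2) + t ^+ 2 * K - (L * (1 + t *+ 2 * (wV u * f u) + t ^+ 2 * wV u)) *+ 2.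
    ring.
  exact: H.
have := quad_lin key.
by rewrite pmulrn_lge0 // subr_ge0.
Qed.

Theorem theorem10 (R : rcfType) (V : finType) (wE : V -> V -> R) (wV : V -> R)
  (i : V) (f : V -> R) (j k : V) :
  (forall u v, wE u v = wE v u) ->
  (forall u v, 0 <= wE u v) ->
  (forall u, 0 <= wV u) ->
  (exists u, wV u != 0) ->
  pos_connected wE [set: V] ->
  pos_connected wE [set~ i] ->
  is_minimizer wE wV i f ->
  (forall u, u != i -> 0 < f u) ->
  ~ pos_connected wE [set~ j] ->
  i != j -> k != j ->
  ~~ pos_connected_in wE [set~ j] i k ->
  0 < wV k ->
  f j < f k /\
  (forall p : seq V, spectral_path wE f i k p -> j \in k :: p).
Proof.
move=> sym pE pV _ conn _ mf fpos _ ij kj nik wk.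
set Rl := pos_adj_in wE [set~ j].
have Rsym : forall x y, Rl x y -> Rl y x.
  move=> x y /and4P [xS yS xy w]; apply/and4P; split=> //; first by rewrite eq_sym.
  by rewrite sym.
pose C := [pred x | connect Rl x k].
have Cclosed : closed Rl C.
  move=> x y Rxy; rewrite /C /=; apply/idP/idP => H.
    exact: connect_trans (connect1 (Rsym _ _ Rxy)) H.
  exact: connect_trans (connect1 Rxy) H.
have iC : i \notin C by exact: nik.
have kC : k \in C by rewrite inE connect0.
have Cnj : forall x, x \in C -> x != j.
  move=> x /connectP [[|y p]] /=; first by move=> _ <-.
  by move=> /andP [/and4P [] ]; rewrite in_setC1.
have Cni : forall x, x \in C -> x != i.
  by move=> x xC; apply: contraNneq iC => <-.
have nbC : forall x v, x \in C -> 0 < wE x v -> v != x -> v != j -> v \in C.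
  move=> x v xC w vx vj.
  have Rxv : Rl x v.
    by apply/and4P; split; [rewrite in_setC1 Cnj | rewrite in_setC1 | rewrite eq_sym | ].
  by have := closed_connect Cclosed (connect1 Rxv); rewrite xC => <-.
split; last first.
  move=> p [pp lp _]; apply: contraT => jp.
  have gen : forall x q, path (spectral_step wE f) x q -> j \notin x :: q -> path Rl x q.
    move=> x q; elim: q x => [|y q IH] x //=.
    move=> /andP [/andP [ynb _] qq]; rewrite !inE negb_or => /andP [xj].
    rewrite negb_or => /andP [yj jq]; rewrite IH ?inE ?negb_or ?yj ?jq //= andbT.
    move: ynb; rewrite inE => /andP [yx w].
    by rewrite /Rl /pos_adj_in !in_setC1 w eq_sym xj eq_sym yj eq_sym yx.
  have pR := gen k p pp jp; have : connect Rl k i by apply/connectP; exists p.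
  by move/(closed_connect Cclosed); rewrite kC => /esym iC'; rewrite iC' in iC.
set L := energy wE f.
have L0 : 0 <= L by exact: energy_ge0.
have Lpos : 0 < L.
  rewrite lt_def L0 andbT; apply/eqP => L00.
  have F0 : fsum wE f = 0 by rewrite -energyE // -/L L00 mul0rn.
  have inner : forall a, \sum_b wE a b * (f b - f a) ^+ 2 = 0.
    move=> a; apply: (psumr_eq0P _ F0) => // a' _.
    by apply: sumr_ge0 => b _; rewrite mulr_ge0 ?sqr_ge0.
  have edge : forall a b, 0 < wE a b -> f a = f b.
    move=> a b w; have := psumr_eq0P _ (inner a) (i := b) isT.
    move=> /(_ (fun b _ => mulr_ge0 (pE a b) (sqr_ge0 _))) /eqP.
    by rewrite mulf_eq0 (gt_eqF w) /= sqrf_eq0 subr_eq0 => /eqP.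
  have cl : closed (pos_adj_in wE [set: V]) [pred x | f x == 0].
    move=> x y /and4P [_ _ _ w]; by rewrite !inE (edge _ _ w).
  have := closed_connect cl (conn i k (in_setT _) (in_setT _)).
  rewrite !inE (let: And3 _ h _ := mf in h) eqxx => /esym /eqP fk0.
  by have := fpos k (Cni k kC); rewrite fk0 ltxx.
rewrite ltNge; apply/negP => fkj.
case: (arg_minP f kC) => u0 u0C minu0.
set m := f u0.
have key : forall x, x \in C -> f x = m -> wV x = 0 /\ (forall v, Rl x v -> f v = m).
  move=> x xC fxm.
  have hEL := EL sym pE pV mf (Cni x xC).
  have term : forall v, wE x v * (f x - f v) <= 0.
    move=> v; case: (eqVneq v x) => [->|vx]; first by rewrite subrr mulr0.
    have := pE x v; rewrite le_eqVlt => /orP [/eqP <-|w]; first by rewrite mul0r.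
    rewrite mulr_ge0_le0 ?(ltW w) // subr_le0 fxm.
    case: (eqVneq v j) => [->|vj]; first by rewrite (le_trans _ fkj) // minu0.
    by apply: minu0; apply: nbC w vx vj.
  have D0 : \sum_v wE x v * (f x - f v) <= 0 by apply: sumr_le0 => v _.
  have fx0 : 0 < f x by apply: fpos; apply: Cni.
  have P0 : 0 <= L * (wV x * f x) by rewrite mulr_ge0 // mulr_ge0 // ltW.
  have D00 : \sum_v wE x v * (f x - f v) = 0 by apply/eqP; rewrite eq_le D0 (le_trans P0 hEL).
  split.
    have : L * (wV x * f x) = 0 by apply/eqP; rewrite eq_le P0 (le_trans hEL) ?D00.
    by move/eqP; rewrite !mulf_eq0 (gt_eqF Lpos) (gt_eqF fx0) orbF => /eqP.
  move=> v Rxv; have : - (wE x v * (f x - f v)) = 0.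
    apply: (psumr_eq0P (P := predT) (F := fun v => - (wE x v * (f x - f v)))) => //.
      by move=> y _; rewrite oppr_ge0.
    by rewrite sumrN D00 oppr0.
  move/eqP; rewrite oppr_eq0 mulf_eq0; case/and4P: Rxv => _ _ _ w.
  by rewrite (gt_eqF w) /= subr_eq0 => /eqP <-.
have cl : closed Rl [pred x | (x \in C) ==> (f x == m)].
  move=> x y Rxy /=.
  have := closed_connect Cclosed (connect1 Rxy) => Cxy.
  change (((x \in C) ==> (f x == m)) = ((y \in C) ==> (f y == m))).
  rewrite -Cxy; case xC: (x \in C) => //=.
  have yC : y \in C by rewrite -Cxy.
  apply/eqP/eqP => H.
    exact: (key x xC H).2.
  exact: (key y yC H).2 _ (Rsym _ _ Rxy).
have := closed_connect cl u0C.
change (((u0 \in C) ==> (f u0 == m)) = ((k \in C) ==> (f k == m)) -> False).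
rewrite (u0C : u0 \in C) eqxx kC /= => /esym /eqP fkm.
by have := (key k kC fkm).1; move=> wk0; rewrite wk0 ltxx in wk.
Qed.
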